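(* Assume $h$ satisfies Assumption 1. If $R\le c/\delta$, then $\hat B^d=B^d$ and $\hat\epsilon(x,i)=0$ for all $i\in\{0,1\}$ and $x=0,1,\dots,B^s$.
   Context: Parameters: $\lambda>0$, $0<\mu_l<\mu_h$, $\delta=\mu_h-\mu_l$, $\Lambda=\lambda+\mu_h$, $R\ge 0$, $c>0$, discount rate $\beta>0$ with the normalization $\Lambda+\beta=1$, and $h:\{0,1,2,\dots\}\to\mathbb{R}$ nondecreasing and convex with $h(0)=0$. Assumption 1: (1) there is $\theta>1$ with $h(x+1)\le\theta h(x)$ for all $x>0$; (2) there exist $\gamma\in[0,1)$ and a positive integer $J$ with $\left(\frac{\Lambda}{\Lambda+\beta}\right)^J[R+c+h(x+J)]\le\gamma[R+c+h(x)]$ for all $x\ge0$. Combined problem finite-horizon values on $S=\{0,1,\dots\}\times\{0,1\}$: $v_0\equiv0$, $v_{n+1}(0,0)=\lambda v_n(0,1)+\mu_h v_n(0,0)$; $v_{n+1}(x,0)=-h(x)+\lambda v_n(x,1)+\mu_l v_n(x-1,0)+\max\{\delta v_n(x,0),-c+\delta v_n(x-1,0)\}$ for $x\ge1$; $v_{n+1}(x,1)=\max\{R+v_{n+1}(x+1,0),v_{n+1}(x,0)\}$. Admission-control subproblem: $\hat v$ defined identically except that the max in the $(x,0)$ equation is replaced by $\delta\hat v_n(x,0)$ (service rate always $\mu_l$). Infinite-horizon values: $v=\lim_n v_n$ and $\hat v=\lim_n\hat v_n$ (pointwise limits, which exist under Assumption 1). $\hat\epsilon(x,i)=v(x,i)-\hat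 v(x,i)$. With $\Delta(x,0)=v(x,0)-v(x+1,0)$, $\hat\Delta(x,0)=\hat v(x,0)-\hat v(x+1,0)$ and $T_f(\theta)=\sup\{k\ge0:f(k)\le\theta\}$ ($\sup\emptyset=-1$, $+\infty$ allowed), the thresholds are $B^s=1+T_{\Delta(\cdot,0)}(c/\delta)$, $B^d=T_{\Delta(\cdot,0)}(R)$ and $\hat B^d=T_{\hat\Delta(\cdot,0)}(R)$. *)

(* Defs.v *)
From Stdlib Require Import Reals ZArith Classical ClassicalEpsilon.
Open Scope R_scope.

(* Finite-horizon values of the combined problem.  The pair is
   (x |-> v_n(x,0), x |-> v_n(x,1)).  [Rw] is the reward R of the paper. *)
Fixpoint vpair (lam mul muh Rw c : R) (h : nat -> R) (n : nat)
  : (nat -> R) * (nat -> R) :=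
  match n with
  | O => (fun _ => 0, fun _ => 0)
  | S m =>
      let p := vpair lam mul muh Rw c h m in
      let a := fst p in let b := snd p in
      let delta := muh - mul in
      let a' := fun x => match x with
                 | O => lam * b O + muh * a O
                 | S y => - h x + lam * b x + mul * a y
                          + Rmax (delta * a x) (- c + delta * a y)
                 end in
      (a', fun x => Rmax (Rw + a' (S x)) (a' x))
  end.

(* Admission-control subproblem: service rate always mu_l. *)
Fixpoint vhpair (lam mul muh Rw c : R) (h : nat -> R) (n : nat)
  : (nat -> R) * (nat -> R) :=
  match n with
  | O => (fun _ => 0, fun _ => 0)
  | S m =>
      let p := vhpair lam mul muh Rw c h m in
      let a := fst p in let b := snd p in
      let delta := muh - mul in
      let a' := fun x => match x with
                 | O => lam * b O + muh * a O
                 | S y => - h x + lam * b x + mul * a y + delta * a x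
                 end in
      (a', fun x => Rmax (Rw + a' (S x)) (a' x))
  end.

(* State (x,i) with i : bool, false = 0, true = 1. *)
Definition vn lam mul muh Rw c h n (x : nat) (i : bool) : R :=
  if i then snd (vpair lam mul muh Rw c h n) x
  else fst (vpair lam mul muh Rw c h n) x.

Definition vhn lam mul muh Rw c h n (x : nat) (i : bool) : R :=
  if i then snd (vhpair lam mul muh Rw c h n) x
  else fst (vhpair lam mul muh Rw c h n) x.

Inductive ext : Type := EFin (z : Z) | EInf.

(* t = sup{k >= 0 : f k <= th}, with sup ∅ = -1 and +∞ allowed. *)
Definition is_T (f : nat -> R) (th : R) (t : ext) : Prop :=
  match t with
  | EInf => forall m : nat, exists k : nat, (m <= k)%nat /\ f k <= th
  | EFin z => (z = (-1)%Z /\ forall k : nat, th < f k)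
              \/ (exists k : nat, z = Z.of_nat k /\ f k <= th /\
                     forall j : nat, (k < j)%nat -> th < f j)
  end.

Definition T_thr (f : nat -> R) (th : R) : ext :=
  epsilon (inhabits EInf) (is_T f th).

Definition ext_add1 (t : ext) : ext :=
  match t with EFin z => EFin (z + 1)%Z | EInf => EInf end.

Definition nat_le_ext (x : nat) (t : ext) : Prop :=
  match t with EFin z => (Z.of_nat x <= z)%Z | EInf => True end.

(* Main.v *)
Require Import Defs.
From Stdlib Require Import Reals ZArith.
From Stdlib Require Import Lra Lia Classical ClassicalEpsilon.
Open Scope R_scope.


Ltac rmaxes := unfold Rmax in *; repeat match goal with
  | |- context [Rle_dec ?a ?b] => destruct (Rle_dec a b)
  | H : context [Rle_dec ?a ?b] |- _ => destruct (Rle_dec a b)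
  end.

Lemma mle (k x y : R) : 0 <= k -> x <= y -> k * x <= k * y.
Proof. intros; apply Rmult_le_compat_l; auto. Qed.

Definition stepA (lam mul muh c : R) (h : nat -> R) (a b : nat -> R) : nat -> R :=
  fun x => match x with
  | O => lam * b O + muh * a O
  | S y => - h x + lam * b x + mul * a y + Rmax ((muh - mul) * a x) (- c + (muh - mul) * a y)
  end.
Definition stepAh (lam mul muh : R) (h : nat -> R) (a b : nat -> R) : nat -> R :=
  fun x => match x with
  | O => lam * b O + muh * a O
  | S y => - h x + lam * b x + mul * a y + (muh - mul) * a x
  end.
Definition stepB (Rw : R) (a : nat -> R) : nat -> R := fun x => Rmax (Rw + a (S x)) (a x).

Lemma vpair_fst lam mul muh Rw c h n :
  fst (vpair lam mul muh Rw c h (S n)) =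
  stepA lam mul muh c h (fst (vpair lam mul muh Rw c h n)) (snd (vpair lam mul muh Rw c h n)).
Proof. reflexivity. Qed.
Lemma vpair_snd lam mul muh Rw c h n :
  snd (vpair lam mul muh Rw c h (S n)) = stepB Rw (fst (vpair lam mul muh Rw c h (S n))).
Proof. reflexivity. Qed.
Lemma vhpair_fst lam mul muh Rw c h n :
  fst (vhpair lam mul muh Rw c h (S n)) =
  stepAh lam mul muh h (fst (vhpair lam mul muh Rw c h n)) (snd (vhpair lam mul muh Rw c h n)).
Proof. reflexivity. Qed.
Lemma vhpair_snd lam mul muh Rw c h n :
  snd (vhpair lam mul muh Rw c h (S n)) = stepB Rw (fst (vhpair lam mul muh Rw c h (S n))).
Proof. reflexivity. Qed.

Definition DI (a : nat -> R) := forall x, 0 <= a x - a (S x) /\ a x - a (S x) <= a (S x) - a (S (S x)).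

Lemma stepB_DI Rw a : DI a -> DI (stepB Rw a).
Proof.
  intros H x. destruct (H x) as [H1 H2]. destruct (H (S x)) as [H3 H4].
  destruct (H (S (S x))) as [H5 H6].
  unfold stepB. split; rmaxes; lra.
Qed.

Lemma stepA_DI lam mul muh c h a b :
  0 < lam -> 0 < mul -> mul < muh -> 0 < c -> h 0%nat = 0 ->
  (forall x, h x <= h (S x)) ->
  (forall x, h (S x) - h x <= h (S (S x)) - h (S x)) ->
  DI a -> DI b -> DI (stepA lam mul muh c h a b).
Proof.
  intros Hl Hm Hmh Hc H0 Hmono Hconv Ha Hb x.
  assert (Hd : 0 <= muh - mul) by lra.
  destruct x as [|y].
  - destruct (Ha 0%nat) as [A1 A2]. destruct (Hb 0%nat) as [B1 B2].
    pose proof (mle lam _ _ (Rlt_le _ _ Hl) B1).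
    pose proof (mle lam _ _ (Rlt_le _ _ Hl) B2).
    pose proof (mle mul _ _ (Rlt_le _ _ Hm) A1).
    pose proof (mle _ _ _ Hd A1). pose proof (mle _ _ _ Hd A2).
    pose proof (Hmono 0%nat). pose proof (Hconv 0%nat).
    unfold stepA. split; rmaxes; lra.
  - destruct (Ha y) as [A1 A2]. destruct (Ha (S y)) as [A3 A4].
    destruct (Hb (S y)) as [B1 B2].
    pose proof (mle lam _ _ (Rlt_le _ _ Hl) B1).
    pose proof (mle lam _ _ (Rlt_le _ _ Hl) B2).
    pose proof (mle mul _ _ (Rlt_le _ _ Hm) A1).
    pose proof (mle mul _ _ (Rlt_le _ _ Hm) A2).
    pose proof (mle _ _ _ Hd A1). pose proof (mle _ _ _ Hd A2).
    pose proof (mle _ _ _ Hd A3). pose proof (mle _ _ _ Hd A4).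
    pose proof (Hmono (S y)). pose proof (Hconv (S y)).
    unfold stepA. split; rmaxes; lra.
Qed.



Definition DLE (a ah : nat -> R) := forall x, a x - a (S x) <= ah x - ah (S x).

Lemma stepB_DLE Rw a ah : DLE a ah -> DLE (stepB Rw a) (stepB Rw ah).
Proof.
  intros H x. pose proof (H x). pose proof (H (S x)). unfold stepB. rmaxes; lra.
Qed.

Lemma stepA_DLE lam mul muh c h a b ah bh :
  0 < lam -> 0 < mul -> mul < muh -> 0 < c ->
  DI a -> DLE a ah -> DLE b bh ->
  DLE (stepA lam mul muh c h a b) (stepAh lam mul muh h ah bh).
Proof.
  intros Hl Hm Hmh Hc Ha Hah Hbh x.
  assert (Hd : 0 <= muh - mul) by lra.
  destruct x as [|y].
  - pose proof (mle lam _ _ (Rlt_le _ _ Hl) (Hbh 0%nat)).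
    pose proof (mle _ _ _ Hd (Hah 0%nat)). destruct (Ha 0%nat) as [A1 A2].
    pose proof (mle _ _ _ Hd A1).
    unfold stepA, stepAh; cbv beta iota. rmaxes; lra.
  - pose proof (mle lam _ _ (Rlt_le _ _ Hl) (Hbh (S y))).
    pose proof (mle _ _ _ Hd (Hah (S y))).
    pose proof (mle mul _ _ (Rlt_le _ _ Hm) (Hah y)).
    destruct (Ha y) as [A1 A2].
    pose proof (mle _ _ _ Hd A1). pose proof (mle _ _ _ Hd A2).
    unfold stepA, stepAh; cbv beta iota. rmaxes; lra.
Qed.

Definition LE (a ah : nat -> R) := forall x, ah x <= a x.

Lemma stepB_LE Rw a ah : LE a ah -> LE (stepB Rw a) (stepB Rw ah).
Proof. intros H x. pose proof (H x). pose proof (H (S x)). unfold stepB. rmaxes; lra. Qed.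

Lemma stepA_LE lam mul muh c h a b ah bh :
  0 < lam -> 0 < mul -> mul < muh -> LE a ah -> LE b bh ->
  LE (stepA lam mul muh c h a b) (stepAh lam mul muh h ah bh).
Proof.
  intros Hl Hm Hmh Ha Hb x.
  assert (Hd : 0 <= muh - mul) by lra.
  assert (Hmh' : 0 <= muh) by lra.
  destruct x as [|y].
  - pose proof (mle lam _ _ (Rlt_le _ _ Hl) (Hb 0%nat)).
    pose proof (mle muh _ _ Hmh' (Ha 0%nat)).
    unfold stepA, stepAh; cbv beta iota. lra.
  - pose proof (mle lam _ _ (Rlt_le _ _ Hl) (Hb (S y))).
    pose proof (mle mul _ _ (Rlt_le _ _ Hm) (Ha y)).
    pose proof (mle _ _ _ Hd (Ha (S y))).
    unfold stepA, stepAh; cbv beta iota. rmaxes; lra.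
Qed.

Lemma stepA_UB lam mul muh Rw c h a b K :
  0 < lam -> 0 < mul -> mul < muh -> 0 < c -> 0 <= K ->
  (forall x, 0 <= h x) -> lam * (Rw + K) + muh * K <= K ->
  (forall x, a x <= K) -> (forall x, b x <= Rw + K) ->
  forall x, stepA lam mul muh c h a b x <= K.
Proof.
  intros Hl Hm Hmh Hc HK Hh HK2 Ha Hb x.
  assert (Hd : 0 <= muh - mul) by lra.
  assert (Hmh' : 0 <= muh) by lra.
  destruct x as [|y].
  - pose proof (mle lam _ _ (Rlt_le _ _ Hl) (Hb 0%nat)).
    pose proof (mle muh _ _ Hmh' (Ha 0%nat)).
    unfold stepA; cbv beta iota. lra.
  - pose proof (mle lam _ _ (Rlt_le _ _ Hl) (Hb (S y))).
    pose proof (mle mul _ _ (Rlt_le _ _ Hm) (Ha y)).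
    pose proof (mle _ _ _ Hd (Ha (S y))).
    pose proof (mle _ _ _ Hd (Ha y)).
    pose proof (Hh (S y)).
    unfold stepA; cbv beta iota. rmaxes; lra.
Qed.

Lemma stepB_UB Rw a K : 0 <= Rw -> 0 <= K -> (forall x, a x <= K) -> forall x, stepB Rw a x <= Rw + K.
Proof. intros HR HK H x. pose proof (H x). pose proof (H (S x)). unfold stepB. rmaxes; lra. Qed.

Lemma stepAh_LB lam mul muh h a b L :
  0 < lam -> 0 < mul -> mul < muh -> 0 <= L -> h 0%nat = 0 ->
  (forall x, 0 <= h x) -> (forall x, h x <= h (S x)) -> 1 + (lam + muh) * L <= L ->
  (forall x, - (L * h x) <= a x) -> (forall x, - (L * h x) <= b x) ->
  forall x, - (L * h x) <= stepAh lam mul muh h a b x.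
Proof.
  intros Hl Hm Hmh HL H0 Hh Hmono HL2 Ha Hb x.
  assert (Hd : 0 <= muh - mul) by lra.
  assert (Hmh' : 0 <= muh) by lra.
  destruct x as [|y].
  - pose proof (mle lam _ _ (Rlt_le _ _ Hl) (Hb 0%nat)).
    pose proof (mle muh _ _ Hmh' (Ha 0%nat)).
    unfold stepAh; cbv beta iota. rewrite H0 in *. lra.
  - pose proof (mle lam _ _ (Rlt_le _ _ Hl) (Hb (S y))).
    pose proof (mle mul _ _ (Rlt_le _ _ Hm) (Ha y)).
    pose proof (mle _ _ _ Hd (Ha (S y))).
    pose proof (mle L _ _ HL (Hmono y)) as Hq.
    pose proof (mle mul _ _ (Rlt_le _ _ Hm) Hq).
    pose proof (mle (h (S y)) _ _ (Hh (S y)) HL2).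
    unfold stepAh; cbv beta iota. lra.
Qed.

Lemma stepB_LB Rw (h : nat -> R) a L : (forall x, - (L * h x) <= a x) -> forall x, - (L * h x) <= stepB Rw a x.
Proof. intros H x. pose proof (H x). unfold stepB. rmaxes; lra. Qed.


Lemma fin_all lam mul muh Rw c h K L :
  0 < lam -> 0 < mul -> mul < muh -> 0 < c -> 0 <= Rw -> 0 <= K -> 0 <= L -> h 0%nat = 0 ->
  (forall x, h x <= h (S x)) ->
  (forall x, h (S x) - h x <= h (S (S x)) - h (S x)) ->
  lam * (Rw + K) + muh * K <= K -> 1 + (lam + muh) * L <= L ->
  (forall x, 0 <= h x) ->
  forall n,
  let a := fst (vpair lam mul muh Rw c h n) in let b := snd (vpair lam mul muh Rw c h n) in
  let ah := fst (vhpair lam mul muh Rw c h n) in let bh := snd (vhpair lam mul muh Rw c h n) in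
  DI a /\ DI b /\ DLE a ah /\ DLE b bh /\ LE a ah /\ LE b bh /\
  (forall x, a x <= K) /\ (forall x, b x <= Rw + K) /\
  (forall x, - (L * h x) <= ah x) /\ (forall x, - (L * h x) <= bh x).
Proof.
  intros Hl Hm Hmh Hc HR HK HL H0 Hmono Hconv HK2 HL2 Hh n.
  induction n as [|n IH].
  - simpl. assert (forall x, 0 <= L * h x) by (intro x; apply Rmult_le_pos; auto).
    unfold DI, DLE, LE.
    repeat split; intros; try lra; specialize (H x); lra.
  - simpl in IH. destruct IH as (I1 & I2 & I3 & I4 & I5 & I6 & I7 & I8 & I9 & I10).
    cbv zeta. rewrite vpair_snd, vhpair_snd, vpair_fst, vhpair_fst.
    assert (DI (stepA lam mul muh c h (fst (vpair lam mul muh Rw c h n))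
            (snd (vpair lam mul muh Rw c h n)))) by (apply stepA_DI; auto).
    assert (DLE (stepA lam mul muh c h (fst (vpair lam mul muh Rw c h n))
            (snd (vpair lam mul muh Rw c h n)))
            (stepAh lam mul muh h (fst (vhpair lam mul muh Rw c h n))
            (snd (vhpair lam mul muh Rw c h n)))) by (apply stepA_DLE; auto).
    assert (LE (stepA lam mul muh c h (fst (vpair lam mul muh Rw c h n))
            (snd (vpair lam mul muh Rw c h n)))
            (stepAh lam mul muh h (fst (vhpair lam mul muh Rw c h n))
            (snd (vhpair lam mul muh Rw c h n)))) by (apply stepA_LE; auto).
    assert (forall x, stepA lam mul muh c h (fst (vpair lam mul muh Rw c h n))
            (snd (vpair lam mul muh Rw c h n)) x <= K) by (apply (stepA_UB _ _ _ Rw); auto).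
    assert (forall x, - (L * h x) <= stepAh lam mul muh h (fst (vhpair lam mul muh Rw c h n))
            (snd (vhpair lam mul muh Rw c h n)) x) by (apply stepAh_LB; auto).
    split; [exact H|]. split; [apply stepB_DI; exact H|].
    split; [exact H1|]. split; [apply stepB_DLE; exact H1|].
    split; [exact H2|]. split; [apply stepB_LE; exact H2|].
    split; [exact H3|]. split; [apply stepB_UB; auto|].
    split; [exact H4|]. apply stepB_LB; exact H4.
Qed.

Lemma cv_shift u l : Un_cv u l -> Un_cv (fun n => u (S n)) l.
Proof. intros H e He. destruct (H e He) as [N HN]. exists N. intros n Hn. apply HN. lia. Qed.

Lemma cv_const k : Un_cv (fun _ => k) k.
Proof. intros e He. exists 0%nat. intros. unfold R_dist. rewrite Rminus_diag, Rabs_R0. auto. Qed.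

Lemma cv_scal k u l : Un_cv u l -> Un_cv (fun n => k * u n) (k * l).
Proof. intros H. exact (CV_mult _ _ _ _ (cv_const k) H). Qed.

Lemma cv_max u w l m : Un_cv u l -> Un_cv w m -> Un_cv (fun n => Rmax (u n) (w n)) (Rmax l m).
Proof.
  intros Hu Hw e He. destruct (Hu e He) as [N1 H1]. destruct (Hw e He) as [N2 H2].
  exists (max N1 N2). intros n Hn. specialize (H1 n ltac:(lia)). specialize (H2 n ltac:(lia)).
  unfold R_dist in *. unfold Rmax.
  destruct (Rle_dec (u n) (w n)); destruct (Rle_dec l m); split_Rabs; lra.
Qed.


Lemma is_T_fin_aux f th : forall m, (forall k, (m <= k)%nat -> th < f k) -> exists z, is_T f th (EFin z).
Proof.
  induction m as [|m IH]; intros H.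
  - exists (-1)%Z. left. split; [reflexivity|]. intro k; apply H; lia.
  - destruct (Rlt_le_dec th (f m)) as [Hl|Hl].
    + apply IH. intros k Hk. destruct (Nat.eq_dec k m); [subst; auto|apply H; lia].
    + exists (Z.of_nat m). right. exists m. split; [reflexivity|split; [exact Hl|]]. intros j Hj; apply H; lia.
Qed.

Lemma is_T_ex f th : exists t, is_T f th t.
Proof.
  destruct (classic (forall m : nat, exists k : nat, (m <= k)%nat /\ f k <= th)) as [H|H].
  - exists EInf. exact H.
  - apply not_all_ex_not in H. destruct H as [m Hm].
    destruct (is_T_fin_aux f th m) as [z Hz].
    + intros k Hk. destruct (Rlt_le_dec th (f k)); auto. exfalso; apply Hm. exists k; auto.
    + exists (EFin z); exact Hz.
Qed.

Lemma T_spec f th : is_T f th (T_thr f th).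
Proof.
  unfold T_thr. apply epsilon_spec. apply is_T_ex.
Qed.

Lemma is_T_uniq f th t1 t2 : is_T f th t1 -> is_T f th t2 -> t1 = t2.
Proof.
  assert (Hinf : forall z, is_T f th EInf -> is_T f th (EFin z) -> False).
  { intros z H1 [[_ H2]|(k & _ & _ & H2)].
    - destruct (H1 0%nat) as (k & _ & Hk). specialize (H2 k). lra.
    - destruct (H1 (S k)) as (j & Hj & Hk). specialize (H2 j ltac:(lia)). lra. }
  destruct t1 as [z1|], t2 as [z2|]; intros H1 H2; auto.
  - destruct H1 as [[-> A1]|(k1 & -> & B1 & C1)]; destruct H2 as [[-> A2]|(k2 & -> & B2 & C2)]; auto.
    + specialize (A1 k2); lra.
    + specialize (A2 k1); lra.
    + destruct (lt_eq_lt_dec k1 k2) as [[Hlt|Heq]|Hlt].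
      * specialize (C1 k2 Hlt); lra.
      * subst; auto.
      * specialize (C2 k1 Hlt); lra.
  - exfalso; eapply Hinf; eauto.
  - exfalso; eapply Hinf; eauto.
Qed.

Lemma T_eq f th t : is_T f th t -> T_thr f th = t.
Proof. intros H. eapply is_T_uniq; [apply T_spec|exact H]. Qed.


Lemma growth_aux l m b p q : 0<l -> 0<m -> 0<b -> l+m+b=1 -> 0<=q -> (l+b)*p <= l*q -> p <= (l+m)*q.
Proof.
  intros Hl Hm Hb Hs Hq H.
  assert (E : (l+m)*(l+b) = l + m*b) by (replace b with (1-l-m) by lra; ring).
  assert (0 <= m*b*q) by (apply Rmult_le_pos; [apply Rmult_le_pos|]; lra).
  assert (0 <= (l+b)*((l+m)*q - p)) by (replace ((l+b)*((l+m)*q - p)) with ((l+m)*(l+b)*q - (l+b)*p) by ring; rewrite E; lra).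
  destruct (Rle_dec p ((l+m)*q)) as [|Hn]; auto.
  assert (0 < (l+b)*(p - (l+m)*q)) by (apply Rmult_lt_0_compat; lra). lra.
Qed.

Lemma pow_le1 x n : 0 <= x <= 1 -> x ^ n <= 1.
Proof. intros H. induction n; simpl; [lra|]. pose proof (pow_le x n (proj1 H)). nra. Qed.

Lemma pow_small x n : 0 <= x < 1 -> (1 <= n)%nat -> x ^ n < 1.
Proof.
  intros H Hn. destruct n; [lia|]. simpl. pose proof (pow_le1 x n ltac:(lra)).
  pose proof (pow_le x n (proj1 H)). nra.
Qed.

Lemma cv_pow0 q : 0 <= q < 1 -> Un_cv (fun k => q ^ k) 0.
Proof.
  intros Hq e He. destruct (pow_lt_1_zero q ltac:(rewrite Rabs_pos_eq; lra) e He) as [N HN].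
  exists N. intros n Hn. unfold R_dist. rewrite Rminus_0_r. apply HN; lia.
Qed.

Lemma le_div d x c : 0 < d -> x <= c / d -> d * x <= c.
Proof.
  intros Hd H. apply (Rmult_le_compat_l d) in H; [|lra].
  replace (d * (c / d)) with c in H by (field; lra). exact H.
Qed.
Lemma lt_div d x c : 0 < d -> c / d < x -> c < d * x.
Proof.
  intros Hd H. apply (Rmult_lt_compat_l d) in H; [|lra].
  replace (d * (c / d)) with c in H by (field; lra). exact H.
Qed.


Theorem theorem4
  (lam mul muh Rw c beta : R) (h : nat -> R)
  (Hlam : 0 < lam) (Hmul : 0 < mul) (Hmulh : mul < muh)
  (HRw : 0 <= Rw) (Hc : 0 < c) (Hbeta : 0 < beta)
  (Hnorm : (lam + muh) + beta = 1)
  (Hh0 : h 0%nat = 0)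
  (Hhmono : forall x : nat, h x <= h (S x))
  (Hhconv : forall x : nat, h (S x) - h x <= h (S (S x)) - h (S x))
  (HA1 : exists theta : R, 1 < theta /\
           forall x : nat, (0 < x)%nat -> h (S x) <= theta * h x)
  (HA2 : exists (gamma : R) (J : nat), 0 <= gamma /\ gamma < 1 /\ (1 <= J)%nat /\
           forall x : nat,
             ((lam + muh) / ((lam + muh) + beta)) ^ J * (Rw + c + h (x + J)%nat)
             <= gamma * (Rw + c + h x))
  (v vh : nat -> bool -> R)
  (Hv : forall x i, Un_cv (fun n => vn lam mul muh Rw c h n x i) (v x i))
  (Hvh : forall x i, Un_cv (fun n => vhn lam mul muh Rw c h n x i) (vh x i))
  (HRc : Rw <= c / (muh - mul)) :
  let Delta := fun x : nat => v x false - v (S x) false in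
  let Deltah := fun x : nat => vh x false - vh (S x) false in
  let Bs := ext_add1 (T_thr Delta (c / (muh - mul))) in
  let Bd := T_thr Delta Rw in
  let Bhd := T_thr Deltah Rw in
  Bhd = Bd /\
  (forall (i : bool) (x : nat), nat_le_ext x Bs -> v x i - vh x i = 0).
Proof.
  intros Delta Deltah Bs Bd Bhd.
  assert (Hh : forall x, 0 <= h x).
  { induction x; [rewrite Hh0; lra|]. pose proof (Hhmono x); lra. }
  assert (Hd : 0 < muh - mul) by lra.
  set (K := lam * Rw / beta). set (L := / beta).
  assert (HK : 0 <= K) by (unfold K; apply Rmult_le_pos; [apply Rmult_le_pos; lra| left; apply Rinv_0_lt_compat; lra]).
  assert (HL : 0 <= L) by (unfold L; left; apply Rinv_0_lt_compat; lra).
  assert (HK2 : lam * (Rw + K) + muh * K <= K).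
  { assert (beta * K = lam * Rw) by (unfold K; field; lra).
    assert (K = (lam + muh + beta) * K) by (rewrite Hnorm; ring). lra. }
  assert (HL2 : 1 + (lam + muh) * L <= L).
  { assert (beta * L = 1) by (unfold L; field; lra).
    assert (L = (lam + muh + beta) * L) by (rewrite Hnorm; ring). lra. }
  pose proof (fun n => fin_all lam mul muh Rw c h K L Hlam Hmul Hmulh Hc HRw HK HL Hh0
                 Hhmono Hhconv HK2 HL2 Hh n) as F.
  cbv zeta in F.
  assert (HA : forall x, Un_cv (fun n => fst (vpair lam mul muh Rw c h n) x) (v x false))
    by (intro x; exact (Hv x false)).
  assert (HB : forall x, Un_cv (fun n => snd (vpair lam mul muh Rw c h n) x) (v x true))
    by (intro x; exact (Hv x true)).
  assert (HAh : forall x, Un_cv (fun n => fst (vhpair lam mul muh Rw c h n) x) (vh x false))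
    by (intro x; exact (Hvh x false)).
  assert (HBh : forall x, Un_cv (fun n => snd (vhpair lam mul muh Rw c h n) x) (vh x true))
    by (intro x; exact (Hvh x true)).
  assert (LDI : forall x, v x false - v (S x) false <= v (S x) false - v (S (S x)) false).
  { intro x. eapply Rle_cv_lim; [|apply CV_minus; [apply HA|apply HA]|apply CV_minus; [apply HA|apply HA]].
    intro n. destruct (F n) as [D _]. exact (proj2 (D x)). }
  assert (LDLE : forall x, v x false - v (S x) false <= vh x false - vh (S x) false).
  { intro x. eapply Rle_cv_lim; [|apply CV_minus; [apply HA|apply HA]|apply CV_minus; [apply HAh|apply HAh]].
    intro n. destruct (F n) as (_ & _ & D & _). exact (D x). }
  assert (LLE0 : forall x, vh x false <= v x false).
  { intro x. eapply Rle_cv_lim; [|apply HAh|apply HA].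
    intro n. destruct (F n) as (_ & _ & _ & _ & D & _). exact (D x). }
  assert (LLE1 : forall x, vh x true <= v x true).
  { intro x. eapply Rle_cv_lim; [|apply HBh|apply HB].
    intro n. destruct (F n) as (_ & _ & _ & _ & _ & D & _). exact (D x). }
  assert (LUB : forall x, v x false <= K).
  { intro x. eapply Rle_cv_lim; [|apply HA|apply cv_const].
    intro n. destruct (F n) as (_ & _ & _ & _ & _ & _ & D & _). exact (D x). }
  assert (LLB : forall x, - (L * h x) <= vh x false).
  { intro x. eapply Rle_cv_lim; [|apply cv_const|apply HAh].
    intro n. destruct (F n) as (_ & _ & _ & _ & _ & _ & _ & _ & D & _). exact (D x). }
  assert (LB : forall x, v x true = Rmax (Rw + v (S x) false) (v x false)).
  { intro x. pose proof (cv_max _ _ _ _ (CV_plus _ _ _ _ (cv_const Rw) (cv_shift _ _ (HA (S x))))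
                                     (cv_shift _ _ (HA x))) as H1.
    exact (UL_sequence _ _ _ (cv_shift _ _ (HB x)) H1). }
  assert (LBh : forall x, vh x true = Rmax (Rw + vh (S x) false) (vh x false)).
  { intro x. pose proof (cv_max _ _ _ _ (CV_plus _ _ _ _ (cv_const Rw) (cv_shift _ _ (HAh (S x))))
                                     (cv_shift _ _ (HAh x))) as H1.
    exact (UL_sequence _ _ _ (cv_shift _ _ (HBh x)) H1). }
  assert (LA0 : v 0%nat false = lam * v 0%nat true + muh * v 0%nat false).
  { pose proof (CV_plus _ _ _ _ (cv_scal lam _ _ (HB 0%nat)) (cv_scal muh _ _ (HA 0%nat))) as H1.
    exact (UL_sequence _ _ _ (cv_shift _ _ (HA 0%nat)) H1). }
  assert (LAh0 : vh 0%nat false = lam * vh 0%nat true + muh * vh 0%nat false).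
  { pose proof (CV_plus _ _ _ _ (cv_scal lam _ _ (HBh 0%nat)) (cv_scal muh _ _ (HAh 0%nat))) as H1.
    exact (UL_sequence _ _ _ (cv_shift _ _ (HAh 0%nat)) H1). }
  assert (LAS : forall y, v (S y) false = - h (S y) + lam * v (S y) true + mul * v y false
            + Rmax ((muh - mul) * v (S y) false) (- c + (muh - mul) * v y false)).
  { intro y.
    pose proof (CV_plus _ _ _ _ (CV_plus _ _ _ _ (CV_plus _ _ _ _ (cv_const (- h (S y)))
       (cv_scal lam _ _ (HB (S y)))) (cv_scal mul _ _ (HA y)))
       (cv_max _ _ _ _ (cv_scal (muh - mul) _ _ (HA (S y)))
          (CV_plus _ _ _ _ (cv_const (- c)) (cv_scal (muh - mul) _ _ (HA y))))) as H1.
    exact (UL_sequence _ _ _ (cv_shift _ _ (HA (S y))) H1). }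
  assert (LAhS : forall y, vh (S y) false = - h (S y) + lam * vh (S y) true + mul * vh y false
            + (muh - mul) * vh (S y) false).
  { intro y.
    pose proof (CV_plus _ _ _ _ (CV_plus _ _ _ _ (CV_plus _ _ _ _ (cv_const (- h (S y)))
       (cv_scal lam _ _ (HBh (S y)))) (cv_scal mul _ _ (HAh y)))
       (cv_scal (muh - mul) _ _ (HAh (S y)))) as H1.
    exact (UL_sequence _ _ _ (cv_shift _ _ (HAh (S y))) H1). }

  clear F HA HB HAh HBh Hv Hvh HA1.
  assert (Emono : forall x, v x false - vh x false <= v (S x) false - vh (S x) false)
    by (intro x; pose proof (LDLE x); lra).
  assert (Emono' : forall x y, (x <= y)%nat -> v x false - vh x false <= v y false - vh y false).
  { intros x y Hxy. induction Hxy; [lra|]. pose proof (Emono m); lra. }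
  assert (Dmono : forall x y, (x <= y)%nat -> Delta x <= Delta y).
  { intros x y Hxy. unfold Delta. induction Hxy; [lra|]. pose proof (LDI m); lra. }
  assert (E1le : forall x, v x true - vh x true <= v (S x) false - vh (S x) false).
  { intro x. rewrite LB, LBh. pose proof (Emono x). unfold Rmax; destruct (Rle_dec _ _); destruct (Rle_dec _ _); lra. }
  assert (Rej : forall x, Rw < Delta x -> v x true - vh x true <= v x false - vh x false).
  { intros x Hx. unfold Delta in Hx. rewrite LB, LBh. unfold Rmax; destruct (Rle_dec _ _); destruct (Rle_dec _ _); lra. }
  assert (Slow : forall y, Delta y <= c / (muh - mul) ->
     v (S y) false - vh (S y) false = lam * (v (S y) true - vh (S y) true)
        + mul * (v y false - vh y false) + (muh - mul) * (v (S y) false - vh (S y) false)).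
  { intros y Hy. pose proof (le_div _ _ _ Hd Hy) as Hy'. unfold Delta in Hy'.
    pose proof (LAS y) as E1. rewrite Rmax_left in E1 by lra. pose proof (LAhS y). lra. }
  assert (Zero : forall N, v N false - vh N false <= (lam + muh) * (v N false - vh N false) ->
                   v N false - vh N false = 0).
  { intros N HN. pose proof (LLE0 N). assert (beta * (v N false - vh N false) <= 0).
    { replace beta with (1 - (lam + muh)) by lra. nra. }
    nra. }
  assert (Hinf : (forall y, Delta y <= c / (muh - mul)) -> forall x, v x false - vh x false = 0).
  { intros HD.
    assert (G1 : forall y, v y false - vh y false <= (lam + muh) * (v (S y) false - vh (S y) false)).
    { intro y. apply (growth_aux lam muh beta); try lra; [pose proof (LLE0 (S y)); lra|].
      destruct y as [|w].
      - pose proof (E1le 0%nat). pose proof (mle lam _ _ (Rlt_le _ _ Hlam) H).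
        assert (lam * (v 0%nat true - vh 0%nat true) + muh * (v 0%nat false - vh 0%nat false)
                = v 0%nat false - vh 0%nat false) by lra.
        replace beta with (1 - lam - muh) by lra. nra.
      - pose proof (Slow w (HD w)) as Sw.
        pose proof (E1le (S w)). pose proof (mle lam _ _ (Rlt_le _ _ Hlam) H).
        pose proof (Emono w). pose proof (mle mul _ _ (Rlt_le _ _ Hmul) H1).
        replace beta with (1 - lam - muh) by lra. nra. }
    assert (G2 : forall m x, v x false - vh x false <= (lam + muh) ^ m * (v (x + m)%nat false - vh (x + m)%nat false)).
    { induction m as [|m IH]; intro x.
      - rewrite Nat.add_0_r. simpl. lra.
      - pose proof (IH x). pose proof (G1 (x + m)%nat).
        replace (x + S m)%nat with (S (x + m)) by lia.
        pose proof (pow_le (lam + muh) m ltac:(lra)).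
        pose proof (mle _ _ _ H1 H0). simpl. lra. }
    destruct HA2 as (gamma & J & Hg0 & Hg1 & HJ & HA2').
    rewrite Hnorm in HA2'. unfold Rdiv in HA2'. rewrite Rinv_1, Rmult_1_r in HA2'.
    set (q := (lam + muh) ^ J).
    assert (Hq : 0 <= q < 1) by (split; [apply pow_le; lra|apply pow_small; [lra|exact HJ]]).
    assert (G4 : forall k x, q ^ k * (Rw + c + h (x + J * k)%nat) <= gamma ^ k * (Rw + c + h x)).
    { induction k as [|k IH]; intro x.
      - rewrite Nat.mul_0_r, Nat.add_0_r. simpl. lra.
      - replace (x + J * S k)%nat with ((x + J * k) + J)%nat by lia.
        pose proof (HA2' (x + J * k)%nat). pose proof (IH x).
        pose proof (pow_le q k (proj1 Hq)).
        pose proof (mle _ _ _ H1 H).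
        fold q in H2. pose proof (mle gamma _ _ Hg0 H0). simpl. lra. }
    intro x0.
    assert (Hb : forall k, v x0 false - vh x0 false <= q ^ k * K + L * (gamma ^ k * (Rw + c + h x0))).
    { intro k. pose proof (G2 (J * k)%nat x0) as Q1. rewrite pow_mult in Q1. fold q in Q1.
      pose proof (LUB (x0 + J * k)%nat). pose proof (LLB (x0 + J * k)%nat).
      pose proof (G4 k x0) as Q2. pose proof (pow_le q k (proj1 Hq)) as Q3.
      assert (Q4 : v (x0 + J * k)%nat false - vh (x0 + J * k)%nat false <= K + L * (Rw + c + h (x0 + J * k)%nat)).
      { assert (0 <= L * (Rw + c)) by (apply Rmult_le_pos; lra). lra. }
      pose proof (mle _ _ _ Q3 Q4).
      pose proof (mle L _ _ HL Q2). nra. }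
    assert (Hlim : Un_cv (fun k => q ^ k * K + L * (gamma ^ k * (Rw + c + h x0))) (0 * K + L * (0 * (Rw + c + h x0)))).
    { apply CV_plus. apply CV_mult; [apply cv_pow0; exact Hq|apply cv_const].
      apply cv_scal. apply CV_mult; [apply cv_pow0; lra|apply cv_const]. }
    pose proof (@Rle_cv_lim (fun _ : nat => v x0 false - vh x0 false) _ _ _ Hb (cv_const _) Hlim). pose proof (LLE0 x0). lra. }

  assert (Hreg : forall x, nat_le_ext x Bs -> v x false - vh x false = 0 /\ v x true - vh x true = 0).
  { intros x Hx. unfold Bs in Hx. pose proof (T_spec Delta (c / (muh - mul))) as HT.
    revert Hx HT. generalize (T_thr Delta (c / (muh - mul))). intros t Hx HT.
    destruct t as [z|].
    - destruct HT as [[-> Hall]|(k & -> & Hk & Hj)].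
      + simpl in Hx. assert (x = 0%nat) by lia. subst x.
        assert (Rw < Delta 0%nat) by (specialize (Hall 0%nat); lra).
        pose proof (Rej 0%nat H) as R0. pose proof (mle lam _ _ (Rlt_le _ _ Hlam) R0).
        assert (E0 : v 0%nat false - vh 0%nat false = 0) by (apply Zero; lra).
        pose proof (LLE1 0%nat). lra.
      + simpl in Hx. assert (Hxk : (x <= S k)%nat) by lia.
        assert (Rw < Delta (S k)) by (specialize (Hj (S k) ltac:(lia)); lra).
        pose proof (Rej (S k) H) as R0. pose proof (mle lam _ _ (Rlt_le _ _ Hlam) R0).
        pose proof (Slow k Hk) as Sk. pose proof (Emono k) as Ek.
        pose proof (mle mul _ _ (Rlt_le _ _ Hmul) Ek).
        assert (E0 : v (S k) false - vh (S k) false = 0) by (apply Zero; lra).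
        pose proof (Emono' x (S k) Hxk). pose proof (LLE0 x). pose proof (LLE1 x).
        split; [lra|].
        destruct (Nat.eq_dec x (S k)) as [->|Hne]; [lra|].
        pose proof (E1le x). pose proof (Emono' (S x) (S k) ltac:(lia)). lra.
    - assert (HD : forall y, Delta y <= c / (muh - mul)).
      { intro y. destruct (HT y) as (k & Hyk & Hk). pose proof (Dmono y k Hyk). lra. }
      pose proof (Hinf HD) as Z. split; [apply Z|].
      pose proof (E1le x). pose proof (Z (S x)). pose proof (LLE1 x). lra. }
  split.
  2: { intros [|] x Hx; destruct (Hreg x Hx); auto. }
  unfold Bhd, Bd. apply T_eq.
  pose proof (T_spec Delta Rw) as HT. revert HT. generalize (T_thr Delta Rw). intros t HT.
  assert (Dge : forall k, Delta k <= Deltah k) by (intro k; unfold Delta, Deltah; apply LDLE).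
  destruct t as [z|].
  - destruct HT as [[-> Hall]|(k & -> & Hk & Hj)].
    + left. split; [reflexivity|]. intro k. pose proof (Hall k). pose proof (Dge k). lra.
    + right. exists k. split; [reflexivity|]. split.
      * assert (Hle : nat_le_ext (S k) Bs).
        { unfold Bs. pose proof (T_spec Delta (c / (muh - mul))) as HT.
          revert HT. generalize (T_thr Delta (c / (muh - mul))). intros t HT.
          destruct t as [z|]; simpl; [|exact I].
          destruct HT as [[-> Hall]|(k' & -> & Hk' & Hj')].
          - exfalso. pose proof (Hall k). lra.
          - destruct (le_lt_dec k k') as [Hkk|Hkk]; [lia|].
            exfalso. pose proof (Hj' k Hkk). lra. }
        assert (Hle' : nat_le_ext k Bs).
        { revert Hle. unfold Bs. destruct (T_thr Delta (c / (muh - mul))); simpl; auto. lia. }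
        destruct (Hreg _ Hle). destruct (Hreg _ Hle').
        unfold Deltah. unfold Delta in Hk. lra.
      * intros j Hjk. pose proof (Hj j Hjk). pose proof (Dge j). lra.
  - assert (HD : forall y, Delta y <= c / (muh - mul)).
    { intro y. destruct (HT y) as (k & Hyk & Hk). pose proof (Dmono y k Hyk). lra. }
    pose proof (Hinf HD) as Z.
    intro m. destruct (HT m) as (k & Hmk & Hk). exists k. split; auto.
    unfold Deltah. unfold Delta in Hk. pose proof (Z k). pose proof (Z (S k)). lra.
Qed.
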